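(* For any $g\ge2$, $n\ge1$ and any $a_1,\dots,a_n\in\mathbb{Z}_{\ge0}$ with $a_1+\cdots+a_n=2g-3+n$, $$P_{g,n+1}(a_1,\dots,a_n,1)=(2n-2)\,P_{g,n}(a_1,\dots,a_n).$$ In particular $P_{g,2}(2g-2,1)=0$, and for $n\ge2$ the vanishing of $P_{g,n}(a_1,\dots,a_n)$ implies the vanishing of $P_{g,n+1}(a_1,\dots,a_n,1)$.
   Context: For $g\ge2$, $m\ge1$, $$P_{g,m}(a_1,\dots,a_m):=\sum_{k=1}^m\frac{(-1)^k(2g-3+k)!}{k!}\sum_{(I_1,\dots,I_k)}\ \sum_{\substack{d_1,\dots,d_k\in\mathbb{Z}_{\ge0}\\ d_1+\cdots+d_k=g-2+m}}\prod_{j=1}^k\binom{2a_{[I_j]}+1}{2d_j}\prod_{i=1}^{|I_j|-1}(2d_j+1-2i),$$ where $(I_1,\dots,I_k)$ runs over ordered $k$-tuples of nonempty pairwise disjoint subsets of $\{1,\dots,m\}$ with union $\{1,\dots,m\}$, $a_{[I]}:=\sum_{\ell\in I}a_\ell$, and $\binom{x}{r}$ is the usual binomial coefficient (zero if $r>x$). *)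

(* Defs.v *)
From HB Require Import structures.
From mathcomp Require Import all_boot all_order all_algebra.
Set Implicit Arguments. Unset Strict Implicit. Unset Printing Implicit Defensive.
Import Order.TTheory GRing.Theory Num.Theory.
Local Open Scope ring_scope.

(* a_[I] for a : seq nat indexed by 'I_m (m = size a); entry l is nth 0 a l *)
Definition asum (m : nat) (a : seq nat) (I : {set 'I_m}) : nat :=
  (\sum_(l in I) nth 0 a l)%N.

Definition ordered_partition (m k : nat) (I : {ffun 'I_k -> {set 'I_m}}) : bool :=
  [&& [forall j, I j != set0],
      [forall j1, forall j2, (j1 != j2) ==> [disjoint I j1 & I j2]] &
      (\bigcup_(j < k) I j == setT)].

Definition blockterm (m : nat) (a : seq nat) (I : {set 'I_m}) (d : nat) : int :=
  ('C((2 * asum a I)%N.+1, (2 * d)%N))%:Z *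
  \prod_(1 <= i < #|I|) ((2 * d + 1)%N%:Z - (2 * i)%N%:Z).

(* P_{g,m}(a_1,...,a_m) with m = size a.  The d_j range over nonnegative
   integers summing to g-2+m, hence each d_j < g-1+m. *)
Definition P (g : nat) (a : seq nat) : int :=
  let m := size a in
  \sum_(1 <= k < m.+1)
    ((-1) ^+ k * ((2 * g - 3 + k)`! %/ k`!)%N%:Z *
     \sum_(I : {ffun 'I_k -> {set 'I_m}} | ordered_partition I)
       \sum_(d : {ffun 'I_k -> 'I_(g - 1 + m)} |
               (\sum_(j < k) (d j : nat))%N == (g - 2 + m)%N)
         \prod_(j < k) blockterm a (I j) (d j)).

(* Main.v *)
Require Import Defs.
From HB Require Import structures.
From mathcomp Require Import all_boot all_order all_algebra.
From mathcomp Require Import ring lra zify.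
Import Order.TTheory GRing.Theory Num.Theory.
Local Open Scope ring_scope.
Set Implicit Arguments. Unset Strict Implicit.

Definition bt (A s d : nat) : int :=
  ('C((2 * A)%N.+1, (2 * d)%N))%:Z *
  \prod_(1 <= i < s) ((2 * d + 1)%N%:Z - (2 * i)%N%:Z).

Lemma blocktermE m (a : seq nat) (I : {set 'I_m}) d :
  blockterm a I d = bt (asum a I) #|I| d.
Proof. by []. Qed.

Lemma bt_small A s d : (A < d)%N -> bt A s d = 0.
Proof. by move=> h; rewrite /bt bin_small ?mul0r //; lia. Qed.

Lemma prod_shift (d t : nat) :
  \prod_(1 <= i < t.+2) ((2 * d.+1 + 1)%N%:Z - (2 * i)%N%:Z) =
  (2 * d + 1)%N%:Z * \prod_(1 <= i < t.+1) ((2 * d + 1)%N%:Z - (2 * i)%N%:Z).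
Proof.
rewrite big_nat_recl //; congr (_ * _).
  by rewrite !PoszD !PoszM; ring.
by apply: eq_bigr => i _; rewrite !PoszD !PoszM; ring.
Qed.

Lemma key_alg (A d b0 b1 b2 Q Q' c : int) :
  (2 * d + 1) * b1 = (2 * A + 1 - 2 * d) * b0 ->
  Q' * c = (2 * d + 1) * Q ->
  (b2 + 2 * b1 + b0) * ((2 * d + 1) * Q) =
  (4 * A + 3 - 2 * d) * (b0 * Q) + c * (b2 * Q').
Proof.
move=> h1 h2.
have -> : c * (b2 * Q') = b2 * (Q' * c) by ring.
rewrite h2.
apply/eqP; rewrite -subr_eq0; apply/eqP.
transitivity (2 * Q * ((2 * d + 1) * b1 - (2 * A + 1 - 2 * d) * b0)); first ring.
by rewrite h1 subrr mulr0.
Qed.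

Lemma bt_rec A t d :
  bt A.+1 t.+2 d.+1 =
    ((4 * A + 3)%N%:Z - (2 * d)%N%:Z) * bt A t.+1 d +
    ((2 * d + 3)%N%:Z - (2 * t.+1)%N%:Z) * bt A t.+1 d.+1.
Proof.
rewrite /bt prod_shift.
set Q := \prod_(1 <= i < t.+1) _.
have HQ' : \prod_(1 <= i < t.+1) ((2 * d.+1 + 1)%N%:Z - (2 * i)%N%:Z) *
    ((2 * d + 3)%N%:Z - (2 * t.+1)%N%:Z) = (2 * d + 1)%N%:Z * Q.
  rewrite -prod_shift [RHS]big_nat_recr //=; congr (_ * _).
  by rewrite !PoszD !PoszM; ring.
set Q' := \prod_(1 <= i < t.+1) _ in HQ'.
set b0 := 'C((2*A).+1, 2*d).
set b1 := 'C((2*A).+1, (2*d).+1).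
set b2 := 'C((2*A).+1, (2 * d.+1)%N).
have E1 : ('C((2 * A.+1).+1, 2 * d.+1))%:Z = b2%:Z + 2 * b1%:Z + b0%:Z.
  rewrite /b2.
  have -> : (2 * A.+1).+1 = ((2*A).+1).+2 by lia.
  have -> : (2 * d.+1)%N = (2*d).+2 by lia.
  rewrite binS !(binS (2*A).+1) /b0 /b1 /b2; lia.
have E2 : (2 * (d%:Z) + 1) * b1%:Z = (2 * (A%:Z) + 1 - 2 * d%:Z) * b0%:Z.
  have h := mul_bin_left (2*A).+1 (2*d).
  rewrite -/b1 -/b0 in h.
  case: (leqP (2*d) (2*A).+1) => hl.
    have h' : ((2*d).+1 * b1)%N%:Z = (((2*A).+1 - 2*d) * b0)%N%:Z by rewrite h.
    rewrite !PoszM -subzn // in h'.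
    have -> : 2 * d%:Z + 1 = Posz (2*d).+1 by rewrite -[(2*d).+1]addn1 PoszD PoszM.
    rewrite h'; congr (_ * _).
    rewrite -[(2*A).+1]addn1 !PoszD ?PoszM /=; ring.
  by rewrite /b0 /b1 !bin_small ?mulr0 //; lia.
rewrite E1.
have -> : ((2 * d + 1)%N%:Z) = 2 * d%:Z + 1 by rewrite PoszD PoszM.
have -> : ((4 * A + 3)%N%:Z - (2 * d)%N%:Z) = 4 * A%:Z + 3 - 2 * d%:Z
  by rewrite PoszD !PoszM.
apply: (@key_alg A%:Z d%:Z) => //.
Qed.

Lemma bt_rec0 A t :
  bt A.+1 t.+2 0 = (1 - (2 * t.+1)%N%:Z) * bt A t.+1 0.
Proof.
rewrite /bt !muln0 !bin0 !mul1r big_nat_recr //= mulrC.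
by congr (_ * _).
Qed.

Definition Psi (A s : nat) : {poly int} := \poly_(d < A.+1) bt A s d.

Lemma coefPsi A s d : (Psi A s)`_d = bt A s d.
Proof.
rewrite /Psi coef_poly; case: ltnP => // h.
by rewrite bt_small.
Qed.

Lemma coefXd (p : {poly int}) i : (p^`() * 'X)`_i = p`_i *+ i.
Proof. by rewrite coefMX; case: i => [|i] //=; rewrite ?coef_deriv ?mulr0n. Qed.

Lemma Psi_rec A s : (0 < s)%N ->
  Psi A.+1 s.+1 =
   (((4 * A + 3)%N%:Z)%:P * Psi A s - 2%:P * ((Psi A s)^`() * 'X)) * 'X
   + (2%:P * ((Psi A s)^`() * 'X) + (1 - (2 * s)%N%:Z)%:P * Psi A s).
Proof.
case: s => [//|t] _.
apply/polyP => i.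
rewrite coefD coefMX !coefD !coefCM coefN coefCM coefXd !coefPsi.
case: i => [|d] /=.
  by rewrite bt_rec0 mulr0n mulr0 !add0r.
rewrite coefXd !coefPsi bt_rec.
have -> : ((4 * A + 3)%N%:Z - (2 * d)%N%:Z) * bt A t.+1 d =
   (4 * A + 3)%N%:Z * bt A t.+1 d - 2 * (bt A t.+1 d *+ d).
  by rewrite -mulr_natr PoszM; ring.
have -> : ((2 * d + 3)%N%:Z - (2 * t.+1)%N%:Z) * bt A t.+1 d.+1 =
   2 * (bt A t.+1 d.+1 *+ d.+1) + (1 - (2 * t.+1)%N%:Z) * bt A t.+1 d.+1.
  by rewrite -mulr_natr !PoszD !PoszM; ring.
by [].
Qed.

Lemma prod_neq_lift0 k (p : 'I_k.+1 -> {poly int}) (j : 'I_k) :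
  \prod_(i < k.+1 | i != lift ord0 j) p i =
  p ord0 * \prod_(i < k | i != j) p (lift ord0 i).
Proof.
rewrite big_mkcond big_ord_recl /= [in RHS]big_mkcond /=.
by congr (_ * _); apply: eq_bigr => i _; rewrite (inj_eq lift_inj).
Qed.

Lemma prod_neq0 k (p : 'I_k.+1 -> {poly int}) :
  \prod_(i < k.+1 | i != ord0) p i = \prod_(i < k) p (lift ord0 i).
Proof.
by rewrite big_mkcond big_ord_recl /= mul1r.
Qed.

Lemma deriv_prod k (p : 'I_k -> {poly int}) :
  (\prod_(j < k) p j)^`() = \sum_(j < k) (p j)^`() * \prod_(i < k | i != j) p i.
Proof.
elim: k p => [|k IH] p.
  by rewrite !big_ord0 derivC.
rewrite big_ord_recl derivM IH big_ord_recl prod_neq0; congr (_ + _).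
rewrite mulr_sumr; apply: eq_bigr => j _.
by rewrite prod_neq_lift0 mulrCA.
Qed.

Lemma prod_if k (p : 'I_k -> {poly int}) (r : {poly int}) (j : 'I_k) :
  \prod_(i < k) (if i == j then r else p i) = r * \prod_(i < k | i != j) p i.
Proof.
rewrite (bigD1 j) //= eqxx; congr (_ * _).
by apply: eq_bigr => i /negbTE ->.
Qed.

Lemma alg_poly k (A s : 'I_k -> nat) : (forall j, 0 < s j)%N ->
  \sum_(j < k) \prod_(i < k) (if i == j then Psi (A i).+1 (s i).+1 else Psi (A i) (s i)) =
  (((\sum_(j < k) (4 * A j + 3)%N%:Z))%:P * \prod_(j < k) Psi (A j) (s j)
     - 2%:P * ((\prod_(j < k) Psi (A j) (s j))^`() * 'X)) * 'X
  + (2%:P * ((\prod_(j < k) Psi (A j) (s j))^`() * 'X)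
     + (\sum_(j < k) (1 - (2 * s j)%N%:Z))%:P * \prod_(j < k) Psi (A j) (s j)).
Proof.
move=> hs.
set p := fun j => Psi (A j) (s j).
set Pi := \prod_(j < k) p j.
have hP : forall j, Pi = p j * \prod_(i < k | i != j) p i.
  by move=> j; rewrite /Pi (bigD1 j).
rewrite deriv_prod.
set c0 : {poly int} := 2%:P * 'X - 2%:P * 'X * 'X.
transitivity (\sum_(j < k)
  (((4 * A j + 3)%N%:Z)%:P * (Pi * 'X) + ((p j)^`() * \prod_(i < k | i != j) p i) * c0
   + (1 - (2 * s j)%N%:Z)%:P * Pi)).
  apply: eq_bigr => j _.
  have -> : \prod_(i < k) (if i == j then Psi (A i).+1 (s i).+1 else Psi (A i) (s i))
     = \prod_(i < k) (if i == j then Psi (A j).+1 (s j).+1 else p i).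
    by apply: eq_bigr => i _; case: eqP => [->|].
  rewrite prod_if Psi_rec // (hP j) -/(p j) /c0.
  ring.
rewrite [LHS]big_split /= [in LHS]big_split /= -!mulr_suml.
rewrite -!(rmorph_sum (@polyC int)) /c0.
ring.
Qed.

Lemma coef_prod_poly k M (c : 'I_k -> nat -> int) N :
  (\prod_(j < k) \poly_(i < M) c j i)`_N =
  \sum_(d : {ffun 'I_k -> 'I_M} | (\sum_(j < k) (d j : nat))%N == N)
     \prod_(j < k) c j (d j).
Proof.
under eq_bigr do rewrite poly_def.
rewrite bigA_distr_bigA /= coef_sum [RHS]big_mkcond /=.
apply: eq_bigr => f _.
have -> : \prod_(j < k) (c j (f j) *: 'X^(f j)) =
    (\prod_(j < k) c j (f j)) *: 'X^(\sum_(j < k) (f j : nat)).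
  rewrite -mul_polyC rmorph_prod -prodrXr -big_split /=.
  by apply: eq_bigr => j _; rewrite mul_polyC.
rewrite coefZ coefXn eq_sym.
by case: eqP => _; rewrite ?mulr1 ?mulr0.
Qed.

Lemma coef_prod_trunc k (p q : 'I_k -> {poly int}) N :
  (forall j i, (i <= N)%N -> (p j)`_i = (q j)`_i) ->
  (\prod_(j < k) p j)`_N = (\prod_(j < k) q j)`_N.
Proof.
move=> h.
suff : forall n, (n <= N)%N -> (\prod_(j < k) p j)`_n = (\prod_(j < k) q j)`_n.
  by apply.
apply: (big_ind2 (fun x y : {poly int} => forall n, (n <= N)%N -> x`_n = y`_n)).
- by [].
- move=> x1 x2 y1 y2 hx hy n hn; rewrite !coefM; apply: eq_bigr => i _.
  rewrite hx ?hy //.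
    by apply: leq_trans hn; apply: leq_subr.
  by apply: leq_trans hn; rewrite -ltnS.
- by move=> j _ n hn; apply: h.
Qed.

Definition ext m (Y : {set 'I_m}) : {set 'I_m.+1} := [set lift ord_max y | y in Y].
Definition restr m (X : {set 'I_m.+1}) : {set 'I_m} := [set y | lift ord_max y \in X].

Lemma in_ext m (Y : {set 'I_m}) y : (lift ord_max y \in ext Y) = (y \in Y).
Proof. by rewrite mem_imset //; exact: lift_inj. Qed.

Lemma max_ext m (Y : {set 'I_m}) : (ord_max \in ext Y) = false.
Proof.
apply/negbTE/imsetP => -[y _ h].
by move: (neq_lift (@ord_max m) y); rewrite -h eqxx.
Qed.

Lemma in_restr m (X : {set 'I_m.+1}) y : (y \in restr X) = (lift ord_max y \in X).
Proof. by rewrite inE. Qed.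

Lemma restr_ext m (Y : {set 'I_m}) : restr (ext Y) = Y.
Proof. by apply/setP => y; rewrite in_restr in_ext. Qed.

Lemma restr_U1ext m (Y : {set 'I_m}) : restr (ord_max |: ext Y) = Y.
Proof.
apply/setP => y; rewrite in_restr !inE in_ext.
by rewrite eq_sym (negbTE (neq_lift _ _)) orFb.
Qed.

Lemma ext_restr m (X : {set 'I_m.+1}) : ord_max \notin X -> ext (restr X) = X.
Proof.
move=> hX; apply/setP => x; case: (unliftP ord_max x) => [y ->|->].
  by rewrite in_ext in_restr.
by rewrite max_ext (negbTE hX).
Qed.

Lemma U1ext_restr m (X : {set 'I_m.+1}) : ord_max \in X -> ord_max |: ext (restr X) = X.
Proof.
move=> hX; apply/setP => x; case: (unliftP ord_max x) => [y ->|->].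
  by rewrite !inE eq_sym (negbTE (neq_lift _ _)) orFb in_ext in_restr.
by rewrite !inE eqxx hX.
Qed.

Lemma opP m k (I : {ffun 'I_k -> {set 'I_m}}) :
  reflect [/\ forall j, I j != set0,
              forall j1 j2 x, x \in I j1 -> x \in I j2 -> j1 = j2
            & forall x, exists j, x \in I j]
          (ordered_partition I).
Proof.
apply: (iffP and3P) => [[/forallP H1 /forallP H2 /eqP H3]|[H1 H2 H3]]; split.
- exact: H1.
- move=> j1 j2 x h1 h2; apply/eqP/negPn/negP => ne.
  have := implyP (forallP (H2 j1) j2) ne.
  rewrite -setI_eq0 => /eqP/setP/(_ x); by rewrite !inE h1 h2.
- move=> x; have : x \in \bigcup_(j < k) I j by rewrite H3 inE.
  by case/bigcupP => j _ hx; exists j.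
- by apply/forallP => j; exact: H1.
- apply/forallP => j1; apply/forallP => j2; apply/implyP => ne.
  rewrite -setI_eq0; apply/eqP/setP => x; rewrite !inE.
  apply/negbTE/negP => /andP[a b]; move: ne; by rewrite (H2 _ _ _ a b) eqxx.
- apply/eqP/setP => x; rewrite inE; have [j hj] := H3 x.
  by apply/bigcupP; exists j.
Qed.

Lemma part_sum m k (I : {ffun 'I_k -> {set 'I_m}}) (F : 'I_m -> nat) :
  ordered_partition I ->
  (\sum_(j < k) \sum_(x in I j) F x = \sum_(x < m) F x)%N.
Proof.
case/opP => _ H2 H3.
rewrite (exchange_big_dep xpredT) //=; apply: eq_bigr => x _.
have [j0 hj0] := H3 x.
rewrite (big_pred1 j0) // => j /=.
apply/idP/eqP => [h|->//]; exact: H2 h hj0.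
Qed.

Lemma sumn_ord (a : seq nat) : (\sum_(x < size a) nth 0 a x)%N = sumn a.
Proof. by rewrite sumnE (big_nth 0) big_mkord. Qed.

Lemma asum_ext m (a : seq nat) (Y : {set 'I_m}) : size a = m ->
  asum (rcons a 1%N) (ext Y) = asum a Y.
Proof.
move=> ha; rewrite /asum /ext big_imset /=; last by move=> x y _ _; exact: lift_inj.
by apply: eq_bigr => y _ /=; rewrite /bump leqNgt ltn_ord add0n nth_rcons ha ltn_ord.
Qed.

Lemma asum_U1ext m (a : seq nat) (Y : {set 'I_m}) : size a = m ->
  asum (rcons a 1%N) (ord_max |: ext Y) = (asum a Y).+1.
Proof.
move=> ha; rewrite /asum big_setU1 /=; last by rewrite max_ext.
rewrite -/(asum _ _) asum_ext // nth_rcons ha ltnn eqxx.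
by rewrite add1n.
Qed.

Lemma card_ext m (Y : {set 'I_m}) : #|ext Y| = #|Y|.
Proof. by rewrite card_imset //; exact: lift_inj. Qed.

Lemma card_U1ext m (Y : {set 'I_m}) : #|ord_max |: ext Y| = #|Y|.+1.
Proof. by rewrite cardsU1 max_ext card_ext. Qed.

Definition hB m k (j : 'I_k) (I : {ffun 'I_k -> {set 'I_m}}) :
  {ffun 'I_k -> {set 'I_m.+1}} :=
  [ffun i => if i == j then ord_max |: ext (I i) else ext (I i)].

Definition rs m k (I : {ffun 'I_k -> {set 'I_m.+1}}) : {ffun 'I_k -> {set 'I_m}} :=
  [ffun i => restr (I i)].

Lemma hB_lift m k j (I : {ffun 'I_k -> {set 'I_m}}) i y :
  (lift ord_max y \in hB j I i) = (y \in I i).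
Proof.
rewrite /hB ffunE; case: eqP => _; last by rewrite in_ext.
by rewrite !inE eq_sym (negbTE (neq_lift _ _)) orFb in_ext.
Qed.

Lemma hB_max m k j (I : {ffun 'I_k -> {set 'I_m}}) i :
  (ord_max \in hB j I i) = (i == j).
Proof.
by rewrite /hB ffunE; case: eqP => _; rewrite ?max_ext // !inE eqxx.
Qed.

Definition hA m k (j : 'I_k.+1) (I : {ffun 'I_k -> {set 'I_m}}) :
  {ffun 'I_k.+1 -> {set 'I_m.+1}} :=
  [ffun i => if unlift j i is Some i0 then ext (I i0) else [set ord_max]].

Definition rA m k (j : 'I_k.+1) (I : {ffun 'I_k.+1 -> {set 'I_m.+1}}) :
  {ffun 'I_k -> {set 'I_m}} :=
  [ffun i0 => restr (I (lift j i0))].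

Lemma hA_lift m k j (I : {ffun 'I_k -> {set 'I_m}}) i0 :
  hA j I (lift j i0) = ext (I i0).
Proof. by rewrite /hA ffunE liftK. Qed.

Lemma hA_j m k j (I : {ffun 'I_k -> {set 'I_m}}) : hA j I j = [set ord_max].
Proof. by rewrite /hA ffunE unlift_none. Qed.

Lemma ext0 m : ext (set0 : {set 'I_m}) = set0.
Proof. by rewrite /ext imset0. Qed.

Lemma sumB m k (j : 'I_k) (F : {ffun 'I_k -> {set 'I_m.+1}} -> int) :
  \sum_(I' | (ordered_partition I' && (ord_max \in I' j)) && ~~ (I' j == [set ord_max])) F I'
  = \sum_(I : {ffun 'I_k -> {set 'I_m}} | ordered_partition I) F (hB j I).
Proof.
rewrite (reindex_onto (hB j) (@rs m k)) /=.
  apply: eq_bigl => I.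
  have -> : rs (hB j I) == I.
    apply/eqP/ffunP => i; rewrite /rs /hB !ffunE.
    by case: eqP => _; [exact: restr_U1ext | exact: restr_ext].
  rewrite andbT; apply/idP/idP.
    case/andP => /andP [/opP [H1 H2 H3] hmx] hne; apply/opP; split.
    - move=> i; apply/negP => /eqP e0.
      case: (eqVneq i j) => [eij|nij].
        move: hne; rewrite -eij /hB ffunE eqxx e0 ext0 setU0.
        by rewrite eqxx.
      by move: (H1 i); rewrite /hB ffunE (negbTE nij) e0 ext0 eqxx.
    - move=> j1 j2 y h1 h2; apply: (H2 j1 j2 (lift ord_max y)); by rewrite hB_lift.
    - move=> y; have [i hi] := H3 (lift ord_max y); exists i; by rewrite -(hB_lift j).
  case/opP => H1 H2 H3; rewrite -andbA; apply/and3P; split.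
  - apply/opP; split.
    + move=> i; have /set0Pn [y hy] := H1 i; apply/set0Pn.
      by exists (lift ord_max y); rewrite hB_lift.
    + move=> j1 j2 x; case: (unliftP ord_max x) => [y ->|->].
        rewrite !hB_lift; exact: H2.
      by rewrite !hB_max => /eqP -> /eqP ->.
    + move=> x; case: (unliftP ord_max x) => [y ->|->].
        by have [i hi] := H3 y; exists i; rewrite hB_lift.
      by exists j; rewrite hB_max.
  - by rewrite hB_max.
  - have /set0Pn [y hy] := H1 j; apply/negP => /eqP e.
    have : lift ord_max y \in hB j I j by rewrite hB_lift.
    by rewrite e inE eq_sym (negbTE (neq_lift _ _)).
move=> I' /andP [/andP [/opP [H1 H2 H3] hmx] hne].
apply/ffunP => i; rewrite /hB /rs !ffunE.
case: eqP => [->|ne]; first exact: U1ext_restr.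
rewrite ext_restr //; apply/negP => hi; apply: ne; exact: H2 _ _ _ hi hmx.
Qed.

Lemma sumA m k (j : 'I_k.+1) (F : {ffun 'I_k.+1 -> {set 'I_m.+1}} -> int) :
  \sum_(I' | (ordered_partition I' && (ord_max \in I' j)) && (I' j == [set ord_max])) F I'
  = \sum_(I : {ffun 'I_k -> {set 'I_m}} | ordered_partition I) F (hA j I).
Proof.
rewrite (reindex_onto (hA j) (rA j)) /=.
  apply: eq_bigl => I.
  have -> : rA j (hA j I) == I.
    by apply/eqP/ffunP => i0; rewrite /rA ffunE hA_lift restr_ext.
  rewrite andbT hA_j eqxx andbT; apply/idP/idP.
    case/andP => /opP [H1 H2 H3] _; apply/opP; split.
    - move=> i0; have := H1 (lift j i0); rewrite hA_lift.
      by apply: contra => /eqP ->; rewrite ext0.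
    - move=> j1 j2 y h1 h2; apply: (@lift_inj _ j).
      by apply: (H2 _ _ (lift ord_max y)); rewrite hA_lift in_ext.
    - move=> y; have [i hi] := H3 (lift ord_max y).
      case: (unliftP j i) hi => [i0 ->|->].
        by rewrite hA_lift in_ext => h; exists i0.
      by rewrite hA_j inE eq_sym (negbTE (neq_lift _ _)).
  case/opP => H1 H2 H3; apply/andP; split; last by rewrite inE.
  apply/opP; split.
  - move=> i; case: (unliftP j i) => [i0 ->|->]; rewrite ?hA_lift ?hA_j.
      have /set0Pn [y hy] := H1 i0; apply/set0Pn.
      by exists (lift ord_max y); rewrite in_ext.
    by apply/set0Pn; exists ord_max; rewrite set11.
  - move=> j1 j2 x.
    case: (unliftP j j1) => [i1 ->|->]; case: (unliftP j j2) => [i2 ->|->];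
      rewrite ?hA_lift ?hA_j //.
    + case: (unliftP ord_max x) => [y ->|->]; rewrite ?in_ext ?max_ext // => h1 h2.
      by rewrite (H2 _ _ _ h1 h2).
    + by rewrite inE => h1 /eqP e; move: h1; rewrite e max_ext.
    + by rewrite inE => /eqP e; rewrite e max_ext.
  - move=> x; case: (unliftP ord_max x) => [y ->|->].
      by have [i0 hi] := H3 y; exists (lift j i0); rewrite hA_lift in_ext.
    by exists j; rewrite hA_j set11.
move=> I' /andP [/andP [/opP [H1 H2 H3] hmx] /eqP hj].
apply/ffunP => i; case: (unliftP j i) => [i0 ->|->].
  rewrite hA_lift /rA ffunE ext_restr //; apply/negP => hi.
  by move: (neq_lift j i0); rewrite (H2 _ _ _ hi hmx) eqxx.
by rewrite hA_j hj.
Qed.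

Definition W m (a : seq nat) k n : int :=
  \sum_(I : {ffun 'I_k -> {set 'I_m}} | ordered_partition I)
     (\prod_(j < k) Psi (asum a (I j)) #|I j|)`_n.

Lemma asum_max m (a : seq nat) : size a = m ->
  asum (rcons a 1%N) [set (@ord_max m)] = 1%N.
Proof.
by move=> ha; rewrite /asum big_set1 nth_rcons /= ha ltnn eqxx.
Qed.

Lemma W_split m (a : seq nat) k n : size a = m ->
  W m.+1 (rcons a 1%N) k.+1 n =
    \sum_(j < k.+1) \sum_(I : {ffun 'I_k -> {set 'I_m}} | ordered_partition I)
        (Psi 1 1 * \prod_(i < k) Psi (asum a (I i)) #|I i|)`_n
  + \sum_(j < k.+1) \sum_(I : {ffun 'I_k.+1 -> {set 'I_m}} | ordered_partition I)
        (\prod_(i < k.+1) (if i == j then Psi (asum a (I i)).+1 #|I i|.+1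
                           else Psi (asum a (I i)) #|I i|))`_n.
Proof.
move=> ha; rewrite /W.
set F := fun I' : {ffun 'I_k.+1 -> {set 'I_m.+1}} =>
  (\prod_(j < k.+1) Psi (asum (rcons a 1%N) (I' j)) #|I' j|)`_n.
transitivity (\sum_(I' | ordered_partition I') \sum_(j | ord_max \in I' j) F I').
  apply: eq_bigr => I' /opP [_ H2 H3]; have [j0 h0] := H3 ord_max.
  rewrite [RHS](big_pred1 j0) // => j /=.
  by apply/idP/eqP => [h|->//]; exact: H2 _ _ _ h h0.
rewrite (exchange_big_dep xpredT) //=.
rewrite -big_split /=; apply: eq_bigr => j _.
rewrite [LHS](bigID (fun I' : {ffun 'I_k.+1 -> {set 'I_m.+1}} => I' j == [set ord_max])) /=.
rewrite sumA sumB; congr (_ + _); apply: eq_bigr => I _; rewrite /F.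
  rewrite (bigD1_ord j) //= hA_j asum_max // cards1.
  apply: (congr1 (fun p : {poly int} => p`_n)); congr (_ * _).
  by apply: eq_bigr => i _; rewrite hA_lift asum_ext // card_ext.
apply: (congr1 (fun p : {poly int} => p`_n)); apply: eq_bigr => i _; rewrite /hB ffunE.
by case: eqP => _; rewrite ?asum_U1ext ?card_U1ext ?asum_ext ?card_ext.
Qed.

Definition cc g k : int := (-1) ^+ k * ((2 * g - 3 + k)`! %/ k`!)%N%:Z.

Lemma Pform g (a : seq nat) m : size a = m -> (2 <= g)%N ->
  P g a = \sum_(1 <= k < m.+1) cc g k * W m a k (g - 2 + m).
Proof.
move=> <- hg; rewrite /P /=; apply: eq_bigr => k _.
rewrite /cc /W; congr (_ * _); apply: eq_bigr => I _.
rewrite -(@coef_prod_poly k _ (fun j i => blockterm a (I j) i)).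
apply: coef_prod_trunc => j i hi.
rewrite coef_poly coefPsi; case: ltnP => // h.
by exfalso; move: h; rewrite leqNgt; case/negP; apply: leq_ltn_trans hi _; lia.
Qed.

Lemma W_gt m (a : seq nat) k n : (m < k)%N -> W m a k n = 0.
Proof.
move=> hk; rewrite /W big1 // => I hI.
exfalso; move: hk; rewrite ltnNge; case/negP.
have := part_sum (fun _ => 1%N) hI.
rewrite sum_nat_const card_ord muln1 => <-.
rewrite -[X in (X <= _)%N]card_ord -sum1_card.
apply: leq_sum => j _; rewrite sum1_card card_gt0.
by case/opP: hI.
Qed.

Lemma W_0 m (a : seq nat) n : (0 < m)%N -> W m a 0 n = 0.
Proof.
move=> hm; rewrite /W big1 // => I /opP [_ _ H3].
by have [[]] := H3 (Ordinal hm).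
Qed.

Lemma Psi11 : Psi 1 1 = 1 + 3%:P * 'X.
Proof.
apply/polyP => d; rewrite coefPsi coefD coef1 coefCM coefX /bt big_geq // mulr1.
case: d => [|[|d]] //=.
by rewrite bin_small ?mulr0 //; lia.
Qed.

Lemma sum_asum m (a : seq nat) k (I : {ffun 'I_k -> {set 'I_m}}) :
  size a = m -> ordered_partition I -> (\sum_(j < k) asum a (I j))%N = sumn a.
Proof.
move=> ha hI; rewrite /asum (part_sum _ hI).
by subst m; rewrite sumn_ord.
Qed.

Lemma sum_card m k (I : {ffun 'I_k -> {set 'I_m}}) :
  ordered_partition I -> (\sum_(j < k) #|I j|)%N = m.
Proof.
move=> hI; have := part_sum (fun _ => 1%N) hI.
rewrite sum_nat_const card_ord muln1 => h; apply: (etrans _ h).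
by apply: eq_bigr => j _; rewrite sum1_card.
Qed.

Lemma alg_coef m (a : seq nat) k (I : {ffun 'I_k -> {set 'I_m}}) n :
  size a = m -> ordered_partition I ->
  \sum_(j < k) (\prod_(i < k) (if i == j then Psi (asum a (I i)).+1 #|I i|.+1
                               else Psi (asum a (I i)) #|I i|))`_n.+1
  = ((4 * sumn a + 3 * k)%N%:Z - (2 * n)%N%:Z) *
       (\prod_(i < k) Psi (asum a (I i)) #|I i|)`_n
    + ((2 * n + 2 + k)%N%:Z - (2 * m)%N%:Z) *
       (\prod_(i < k) Psi (asum a (I i)) #|I i|)`_n.+1.
Proof.
move=> ha hI.
rewrite -coef_sum (@alg_poly k (fun i => asum a (I i)) (fun i => #|I i|)); last first.
  by move=> j; rewrite card_gt0; case/opP: hI.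
set Q := \prod_(j < k) _.
rewrite coefD coefMX /= coefB coefD !coefCM !coefXd.
have -> : \sum_(j < k) (4 * asum a (I j) + 3)%N%:Z = (4 * sumn a + 3 * k)%N%:Z.
  rewrite -(rmorph_sum Posz); congr Posz.
  by rewrite big_split sum_nat_const card_ord /= -(sum_asum ha hI) big_distrr /=; rewrite [(k * 3)%N]mulnC.
rewrite [X in _ + (_ + X * Q`_n.+1)](_ : _ = k%:Z - (2 * m)%N%:Z); last first.
  have -> : (2 * m)%N%:Z = \sum_(j < k) (2 * #|I j|)%N%:Z.
    rewrite -(rmorph_sum Posz); congr Posz.
    transitivity (2 * \sum_(j < k) #|I j|)%N; first by rewrite (sum_card hI).
    by rewrite big_distrr.
  by rewrite sumrB sumr_const card_ord natz.
rewrite -[Q`_n *+ n]mulr_natr -[Q`_n.+1 *+ n.+1]mulr_natr !natz.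
rewrite !PoszD ?PoszM.
have -> : Posz n.+1 = Posz n + 1 by rewrite -addn1 PoszD.
ring.
Qed.

Lemma W_rec m (a : seq nat) k N : size a = m ->
  W m.+1 (rcons a 1%N) k.+1 N.+1 =
    (k.+1)%:Z * (W m a k N.+1 + 3 * W m a k N)
  + ((4 * sumn a + 3 * k.+1)%N%:Z - (2 * N)%N%:Z) * W m a k.+1 N
  + ((2 * N + 2 + k.+1)%N%:Z - (2 * m)%N%:Z) * W m a k.+1 N.+1.
Proof.
move=> ha; rewrite W_split // -addrA; congr (_ + _).
  rewrite sumr_const card_ord -[_ *+ k.+1]mulr_natl; congr (_ * _); first by rewrite natz.
  rewrite /W mulr_sumr -big_split /=; apply: eq_bigr => I _.
  by set Q := (\prod_(i < k) _); rewrite Psi11 mulrDl mul1r -mulrA coefD coefCM ['X * Q]mulrC coefMX //.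
rewrite (exchange_big_dep (@ordered_partition m k.+1)) //= /W !mulr_sumr -big_split /=; apply: eq_bigr => I hI.
by under eq_bigl do rewrite hI; rewrite alg_coef.
Qed.

Lemma factdiv L k : (k <= L)%N -> (L`! %/ k`! = 'C(L, k) * (L - k)`!)%N.
Proof.
move=> hk; rewrite -{1}(bin_fact hk).
have -> : ('C(L, k) * (k`! * (L - k)`!) = ('C(L, k) * (L - k)`!) * k`!)%N.
  by rewrite mulnCA mulnC.
by rewrite mulnK // fact_gt0.
Qed.

Lemma cc_rec G k :
  cc G.+2 k.+1 * (k.+1)%:Z = - ((2 * G + 2 + k)%N%:Z) * cc G.+2 k.
Proof.
rewrite /cc.
have -> : (2 * G.+2 - 3 + k.+1 = (2 * G + 1 + k).+1)%N by lia.
have -> : (2 * G.+2 - 3 + k = 2 * G + 1 + k)%N by lia.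
rewrite !factdiv; try lia.
have -> : ((2 * G + 1 + k).+1 - k.+1 = 2 * G + 1 + k - k)%N by lia.
set L := (2 * G + 1 + k)%N.
have hb : ('C(L.+1, k.+1) * k.+1 = L.+1 * 'C(L, k))%N.
  by rewrite mulnC -mul_bin_diag.
have -> : (2 * G + 2 + k = L.+1)%N by rewrite /L; lia.
rewrite exprS.
have hX : ('C(L.+1, k.+1) * (L - k)`!)%N%:Z * k.+1%:Z =
          L.+1%:Z * ('C(L, k) * (L - k)`!)%N%:Z.
  by rewrite -!PoszM mulnAC hb mulnA.
apply/eqP; rewrite -subr_eq0; apply/eqP.
transitivity (- (-1) ^+ k * (('C(L.+1, k.+1) * (L - k)`!)%N%:Z * k.+1%:Z
                               - L.+1%:Z * ('C(L, k) * (L - k)`!)%N%:Z)).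
  ring.
by rewrite hX subrr mulr0.
Qed.

Lemma shift_sum n (T : nat -> int) : T 0%N = 0 -> T n.+1 = 0 ->
  \sum_(k < n.+1) T k.+1 = \sum_(k < n.+1) T k.
Proof.
move=> h0 h1.
transitivity (\sum_(k < n.+2) T k).
  by rewrite [RHS]big_ord_recl /= h0 add0r.
by rewrite [LHS]big_ord_recr /= h1 addr0.
Qed.

Lemma part1 g n (a : seq nat) :
  (2 <= g)%N -> (1 <= n)%N -> size a = n -> sumn a = (2 * g - 3 + n)%N ->
  P g (rcons a 1%N) = (2 * n - 2)%N%:Z * P g a.
Proof.
case: g => [|[|G]] // _ hn ha hs.
rewrite (@Pform _ _ n.+1) ?size_rcons ?ha // (Pform ha) //.
set N := (G.+2 - 2 + n)%N.
have -> : (G.+2 - 2 + n.+1 = N.+1)%N by rewrite /N; lia.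
have hR : \sum_(1 <= k < n.+1) cc G.+2 k * W n a k N =
          \sum_(k < n.+1) cc G.+2 k * W n a k N.
  rewrite -(big_mkord xpredT (fun k => cc G.+2 k * W n a k N)).
  by rewrite [RHS](big_ltn (m:=0)) // W_0 // mulr0 add0r.
rewrite hR big_add1 /= big_mkord.
set T := fun j : nat => cc G.+2 j *
  (((4 * sumn a + 3 * j)%N%:Z - (2 * N)%N%:Z) * W n a j N
   + ((2 * N + 2 + j)%N%:Z - (2 * n)%N%:Z) * W n a j N.+1).
transitivity (\sum_(k < n.+1)
    (- (2 * G + 2 + k)%N%:Z * cc G.+2 k * (W n a k N.+1 + 3 * W n a k N))
  + \sum_(k < n.+1) T k.+1).
  rewrite -big_split; apply: eq_bigr => k _ /=.
  rewrite W_rec // /T.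
  have hc := cc_rec G k.
  apply/eqP; rewrite -subr_eq0; apply/eqP.
  transitivity ((W n a k N.+1 + 3 * W n a k N) *
     (cc G.+2 k.+1 * k.+1%:Z - (- (2 * G + 2 + k)%N%:Z * cc G.+2 k))); first ring.
  by rewrite hc subrr mulr0.
rewrite (@shift_sum n T); first last.
- by rewrite /T !W_gt // !(mulr0, addr0).
- by rewrite /T !W_0 // !(mulr0, addr0).
rewrite -big_split mulr_sumr; apply: eq_bigr => k _ /=.
rewrite /T hs.
have -> : (2 * G.+2 - 3 + n = 2 * G + 1 + n)%N by lia.
have -> : N = (G + n)%N by rewrite /N; lia.
rewrite -subzn; last lia.
rewrite !PoszD ?PoszM.
ring.
Qed.

Theorem corollary5p6 :
  (forall (g n : nat) (a : seq nat),
     (2 <= g)%N -> (1 <= n)%N -> size a = n -> sumn a = (2 * g - 3 + n)%N ->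
     P g (rcons a 1%N) = (2 * n - 2)%N%:Z * P g a)
  /\ (forall g : nat, (2 <= g)%N -> P g [:: (2 * g - 2)%N; 1%N] = 0)
  /\ (forall (g n : nat) (a : seq nat),
     (2 <= g)%N -> (2 <= n)%N -> size a = n -> sumn a = (2 * g - 3 + n)%N ->
     P g a = 0 -> P g (rcons a 1%N) = 0).
Proof.
split; first exact: part1.
split.
  move=> g hg.
  have := @part1 g 1 [:: (2 * g - 2)%N] hg (leqnn 1) erefl.
  rewrite /= addn0 => h; rewrite h; last by lia.
  by rewrite mul0r.
move=> g n a hg hn ha hs h0.
by rewrite (part1 hg _ ha hs) ?h0 ?mulr0 //; lia.
Qed.
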